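(* For natural concepts $C_1,C_2,D_1,D_2$: $\{C_1:C_2::D_1:D_2\}\models C_2:C_1::D_2:D_1$, i.e. every model of the TBox consisting of the analogy assertion $C_1:C_2::D_1:D_2$ satisfies the analogy assertion $C_2:C_1::D_2:D_1$.
   Context: Concepts: $C,D::=\top\mid\bot\mid A\mid C\sqcap D\mid \exists r.C\mid N$; natural concepts: $N,N'::=A'\mid N\sqcap N'\mid N\bowtie N'\mid \exists r'.N$, with $A$ a concept name, $A'$ a natural concept name, $r$ a role name, $r'$ an intra-domain role name. A domain constrained interpretation is $\mathfrak{I}=(\mathcal{I},[\mathcal{F}_1,\dots,\mathcal{F}_k],\mathcal{X},\pi,\sim,\mathcal{S})$ where $\mathcal{I}=(\Delta^{\mathcal{I}},\cdot^{\mathcal{I}})$ is a classical DL interpretation, $[\mathcal{F}_1,\dots,\mathcal{F}_k]$ partitions a nonempty finite set $\mathcal{F}$, $\mathcal{X}\subseteq2^{\mathcal{F}}$ with $\mathcal{F}\in\mathcal{X}$, $\pi:\Delta^{\mathcal{I}}\to2^{\mathcal{F}}$, $\sim$ an equivalence relation on $\{1,\dots,k\}$, $\mathcal{S}=\{\sigma_{(s,t)}\mid(s,t)\in\sim\}$ with $\sigma_{(s,t)}:\mathcal{F}_s\to\mathcal{F}_t$ bijections. With $\mathcal{C}=\{G\subseteq\mathcal{F}\mid X\not\subseteq G\ \forall X\in\mathcal{X}\}$ and $\mathcal{C}^i=\{G\in\mathcal{C}\mid G\subseteq\mathcal{F}_i\}$ it is required: (1) $X\not\subseteq\pi(d)$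 for all $d$, $X\in\mathcal{X}$; (2) each $G\in\mathcal{C}$ is $\pi(d)$ for some $d$; (3) $\sigma_{(s,t)}^{-1}=\sigma_{(t,s)}$, $\sigma_{(t,u)}\circ\sigma_{(s,t)}=\sigma_{(s,u)}$; (4) $\sigma_{(i,j)}(G)\in\mathcal{C}$ for $G\in\mathcal{C}^i$, $(i,j)\in\sim$; (5) $\{f,g\}\in\mathcal{X}$ whenever $f\in\mathcal{F}_i$, $g\in\mathcal{F}_j$, $(i,j)\in\sim$, $i\neq j$. $\varphi(C)=\bigcap\{\pi(d)\mid d\in C^{\mathcal{I}}\}$ ($=\mathcal{F}$ if $C^{\mathcal{I}}=\emptyset$). Concepts are interpreted as usual, with $(N\bowtie N')^{\mathcal{I}}=\{d\mid\varphi(N)\cap\varphi(N')\subseteq\pi(d)\}$. An intra-domain relation $r$: there is $\kappa_r:2^{\mathcal{F}}\to2^{\mathcal{F}}$ with $(\exists r.C)^{\mathcal{I}}=\{d\mid\kappa_r(\varphi(C))\subseteq\pi(d)\}$ for all $C$, $\kappa_r(G)=\bigcup_i\kappa_r(G\cap\mathcal{F}_i)$ for $G\in\mathcal{C}$, $\kappa_r(G)\subseteq\mathcal{F}_i$ for $G\in\mathcal{C}^i$, $\kappa_r(\sigma_{(i,j)}(G))=\sigma_{(i,j)}(\kappa_r(G))$ for $(i,j)\in\sim$, $G\in\mathcal{C}^i$, and $\kappa_r(G)\neq\emptyset$ for $G\in\mathcal{C}^i\setminus\{\emptyset\}$. $\delta(C)=\{i\mid\mathcal{F}_i\cap\varphi(C)\neq\emptyset\}$.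 For $U=\{(s_1,t_1),\dots,(s_l,t_l)\}\subseteq\sim$ with pairwise distinct $s_i$ and pairwise distinct $t_i$, the domain translation $\sigma_U:\mathcal{F}\to\mathcal{F}$ maps $f\in\mathcal{F}_{s_i}$ to $\sigma_{(s_i,t_i)}(f)$ and fixes all other features; $\mathrm{src}(U)=\{s_i\}$, $\mathrm{tgt}(U)=\{t_i\}$. $\mu(C,D)$ is the set of $\sigma_U$ with $\varphi(D)=\sigma_U(\varphi(C))$, $\mathrm{src}(U)\subseteq\delta(C)$, $\mathrm{tgt}(U)\cap(\delta(C)\setminus\mathrm{src}(U))=\emptyset$. An analogy assertion $C_1:C_2::D_1:D_2$ (between natural concepts) is satisfied in $\mathfrak{I}$ iff $\mu(C_1,C_2)\cap\mu(D_1,D_2)\neq\emptyset$; a concept inclusion $C\sqsubseteq D$ is satisfied iff $C^{\mathcal{I}}\subseteq D^{\mathcal{I}}$. A TBox is a finite set of concept inclusions and analogy assertions. $\mathfrak{I}$ is a model of a TBox $\mathcal{T}$ if it satisfies all its elements, every natural concept $N$ in $\mathcal{T}$ satisfies $N^{\mathcal{I}}=\{d\mid\varphi(N)\subseteq\pi(d)\}$, and every intra-domain role name is interpreted as an intra-domain relation. $\mathcal{T}\models\psi$ means every model of $\mathcal{T}$ satisfies $\psi$. *)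

(* Defs.v *)
From mathcomp Require Import all_boot.
From mathcomp Require Import boolp.
Set Warnings "-notation-overridden".
Set Implicit Arguments.
Unset Strict Implicit.
Unset Printing Implicit Defensive.

(* Role names: ordinary role names and intra-domain role names. *)
Inductive role := RName of nat | IRName of nat.

Inductive natconcept :=
| NName of nat
| NAnd of natconcept & natconcept
| NBowtie of natconcept & natconcept
| NEx of nat & natconcept.           (* ∃ (IRName r') . N *)

Inductive concept :=
| CTop | CBot
| CName of nat
| CAnd of concept & concept
| CEx of role & concept
| CNat of natconcept.

Inductive axiom :=
| Incl of concept & concept
| Analogy of natconcept & natconcept & natconcept & natconcept.

Definition tbox := seq axiom.

Record dcinterp := DCInterp {
  Dom : Type;
  Feat : finType;
  nblk : nat;
  blk : Feat -> 'I_nblk;                   (* f ∈ F_(blk f) : the partition *)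
  Xs : {set {set Feat}};
  pi : Dom -> {set Feat};
  sim : rel 'I_nblk;
  sigma : 'I_nblk -> 'I_nblk -> Feat -> Feat; (* σ_(s,t), relevant on F_s for s ~ t *)
  cI : nat -> Dom -> Prop;
  nI : nat -> Dom -> Prop;
  rI : role -> Dom -> Dom -> Prop
}.

Arguments Dom : clear implicits.
Arguments Feat : clear implicits.
Arguments nblk : clear implicits.
Arguments blk : clear implicits.
Arguments Xs : clear implicits.
Arguments pi : clear implicits.
Arguments sim : clear implicits.
Arguments sigma : clear implicits.
Arguments cI : clear implicits.
Arguments nI : clear implicits.
Arguments rI : clear implicits.

Section Semantics.
Variable I : dcinterp.
Local Notation D := (Dom I).
Local Notation F := (Feat I).
Local Notation k := (nblk I).

Definition Fi (i : 'I_k) : {set F} := [set f | blk I f == i].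

(* φ of a set of elements: ⋂ {π(d) | d ∈ S}, = F if S is empty *)
Definition phi (S : D -> Prop) : {set F} :=
  [set f | `[< forall d, S d -> f \in pi I d >] ].

Definition inC (G : {set F}) : bool := [forall X in Xs I, ~~ (X \subset G)].
Definition inCi (i : 'I_k) (G : {set F}) : bool := inC G && (G \subset Fi i).

Fixpoint next (N : natconcept) : D -> Prop :=
  match N with
  | NName a => nI I a
  | NAnd N1 N2 => fun d => next N1 d /\ next N2 d
  | NBowtie N1 N2 => fun d => phi (next N1) :&: phi (next N2) \subset pi I d
  | NEx r N1 => fun d => exists e, rI I (IRName r) d e /\ next N1 e
  end.

Fixpoint ext (C : concept) : D -> Prop :=
  match C with
  | CTop => fun _ => True
  | CBot => fun _ => False
  | CName a => cI I a
  | CAnd C1 C2 => fun d => ext C1 d /\ ext C2 d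
  | CEx r C1 => fun d => exists e, rI I r d e /\ ext C1 e
  | CNat N => next N
  end.

Definition is_dcinterp : Prop :=
  (0 < #|F|) /\ (forall i : 'I_k, exists f : F, blk I f = i) /\
  ([set: F] \in Xs I) /\
  (forall i, sim I i i) /\ (forall i j, sim I i j -> sim I j i) /\
  (forall i j l, sim I i j -> sim I j l -> sim I i l) /\
  (forall s t, sim I s t ->
     {in Fi s, forall f, sigma I s t f \in Fi t} /\
     {in Fi s &, injective (sigma I s t)} /\
     (forall g, g \in Fi t -> exists2 f, f \in Fi s & sigma I s t f = g)) /\
  (forall d X, X \in Xs I -> ~~ (X \subset pi I d)) /\
  (forall G, inC G -> exists d, pi I d = G) /\
  (forall s t, sim I s t -> {in Fi s, forall f, sigma I t s (sigma I s t f) = f}) /\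
  (forall s t u, sim I s t -> sim I t u ->
     {in Fi s, forall f, sigma I t u (sigma I s t f) = sigma I s u f}) /\
  (forall i j G, sim I i j -> inCi i G -> inC (sigma I i j @: G)) /\
  (forall i j f g, sim I i j -> i != j -> f \in Fi i -> g \in Fi j ->
     [set f; g] \in Xs I).

Definition intra_domain (r : role) : Prop :=
  exists kappa : {set F} -> {set F},
    (forall C d, ext (CEx r C) d <-> kappa (phi (ext C)) \subset pi I d) /\
    (forall G, inC G -> kappa G = \bigcup_(i < k) kappa (G :&: Fi i)) /\
    (forall i G, inCi i G -> kappa G \subset Fi i) /\
    (forall i j G, sim I i j -> inCi i G ->
       kappa (sigma I i j @: G) = sigma I i j @: kappa G) /\
    (forall i G, inCi i G -> G != set0 -> kappa G != set0).

Definition delta (S : D -> Prop) : {set 'I_k} :=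
  [set i | phi S :&: Fi i != set0].

Definition validU (U : {set 'I_k * 'I_k}) : Prop :=
  (forall p, p \in U -> sim I p.1 p.2) /\
  {in U &, forall p q, p.1 = q.1 -> p = q} /\
  {in U &, forall p q, p.2 = q.2 -> p = q}.

Definition sigmaU (U : {set 'I_k * 'I_k}) (f : F) : F :=
  match [pick p in U | p.1 == blk I f] with
  | Some p => sigma I p.1 p.2 f
  | None => f
  end.

Definition src (U : {set 'I_k * 'I_k}) : {set 'I_k} := [set p.1 | p in U].
Definition tgt (U : {set 'I_k * 'I_k}) : {set 'I_k} := [set p.2 | p in U].

Definition in_mu (g : F -> F) (SC SD : D -> Prop) : Prop :=
  exists U, validU U /\ g =1 sigmaU U /\
    phi SD = g @: phi SC /\
    src U \subset delta SC /\
    tgt U :&: (delta SC :\: src U) = set0.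

Definition sat_axiom (a : axiom) : Prop :=
  match a with
  | Incl C1 C2 => forall d, ext C1 d -> ext C2 d
  | Analogy N1 N2 N3 N4 =>
      exists g : F -> F, in_mu g (next N1) (next N2) /\ in_mu g (next N3) (next N4)
  end.

End Semantics.

Arguments Fi : clear implicits.
Arguments phi : clear implicits.
Arguments inC : clear implicits.
Arguments inCi : clear implicits.
Arguments next : clear implicits.
Arguments ext : clear implicits.
Arguments is_dcinterp : clear implicits.
Arguments intra_domain : clear implicits.
Arguments delta : clear implicits.
Arguments validU : clear implicits.
Arguments sigmaU : clear implicits.
Arguments src : clear implicits.
Arguments tgt : clear implicits.
Arguments in_mu : clear implicits.
Arguments sat_axiom : clear implicits.

Fixpoint occursN (M N : natconcept) : Prop :=
  M = N \/
  match N with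
  | NName _ => False
  | NAnd N1 N2 | NBowtie N1 N2 => occursN M N1 \/ occursN M N2
  | NEx _ N1 => occursN M N1
  end.

Fixpoint occursC (M : natconcept) (C : concept) : Prop :=
  match C with
  | CTop | CBot | CName _ => False
  | CAnd C1 C2 => occursC M C1 \/ occursC M C2
  | CEx _ C1 => occursC M C1
  | CNat N => occursN M N
  end.

Definition occursA (M : natconcept) (a : axiom) : Prop :=
  match a with
  | Incl C1 C2 => occursC M C1 \/ occursC M C2
  | Analogy N1 N2 N3 N4 => occursN M N1 \/ occursN M N2 \/ occursN M N3 \/ occursN M N4
  end.

Fixpoint inT (a : axiom) (T : tbox) : Prop :=
  match T with [::] => False | b :: T' => a = b \/ inT a T' end.

Definition is_model (T : tbox) (I : dcinterp) : Prop :=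
  is_dcinterp I /\
  (forall a, inT a T -> sat_axiom I a) /\
  (forall M a, inT a T -> occursA M a ->
     forall d, next I M d <-> phi I (next I M) \subset pi I d) /\
  (forall r, intra_domain I (IRName r)).

Definition entails (T : tbox) (psi : axiom) : Prop :=
  forall I : dcinterp, is_model T I -> sat_axiom I psi.

(* Main.v *)
Require Import Defs.
From mathcomp Require Import all_boot boolp.
Set Implicit Arguments.
Unset Strict Implicit.
Set Warnings "-notation-overridden".

Lemma blk_sigma I (HI : is_dcinterp I) s t f :
  sim I s t -> blk I f = s -> blk I (sigma I s t f) = t.
Proof.
case: HI => _ [_ [_ [_ [_ [_ [Hb _]]]]]] st bf.
have [m _] := Hb s t st.
have : f \in Fi I s by rewrite inE bf.
by move/m; rewrite inE => /eqP.
Qed.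

Lemma sigma_inv I (HI : is_dcinterp I) s t f :
  sim I s t -> blk I f = s -> sigma I t s (sigma I s t f) = f.
Proof.
case: HI => _ [_ [_ [_ [_ [_ [_ [_ [_ [H3a _]]]]]]]]] st bf.
by apply: H3a st _ _; rewrite inE bf.
Qed.

Lemma sigma_id I (HI : is_dcinterp I) s f :
  blk I f = s -> sigma I s s f = f.
Proof.
move=> bf; have HI' := HI.
case: HI => _ [_ [_ [Hr [_ [_ [Hb [_ [_ [_ [H3b _]]]]]]]]]].
have [_ [inj _]] := Hb s s (Hr s).
have fs : f \in Fi I s by rewrite inE bf.
apply: inj => //; last exact: H3b.
by rewrite inE (blk_sigma HI' (Hr s) bf).
Qed.

Lemma sigmaU_some I (U : {set 'I_(nblk I) * 'I_(nblk I)}) f p :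
  validU I U -> p \in U -> p.1 = blk I f -> sigmaU I U f = sigma I p.1 p.2 f.
Proof.
move=> [_ [u1 _]] pU pb; rewrite /sigmaU; case: pickP => [q /andP[qU /eqP qb]|none].
  by rewrite (u1 q p qU pU) // qb pb.
by move: (none p); rewrite pU pb eqxx.
Qed.

Lemma sigmaU_none I (U : {set 'I_(nblk I) * 'I_(nblk I)}) f :
  (forall p, p \in U -> p.1 <> blk I f) -> sigmaU I U f = f.
Proof.
move=> nn; rewrite /sigmaU; case: pickP => [q /andP[qU /eqP qb]|//].
by case: (nn q qU qb).
Qed.

Lemma blk_nonempty I (HI : is_dcinterp I) i : exists f, blk I f = i.
Proof. by case: HI => _ [Hn _]. Qed.

Definition nonId I (U : {set 'I_(nblk I) * 'I_(nblk I)}) :=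
  [set p in U | p.1 != p.2].
Definition invU I (U : {set 'I_(nblk I) * 'I_(nblk I)}) :=
  [set (p.2, p.1) | p in nonId U].

Lemma nonId_sub I (HI : is_dcinterp I) (U U' : {set 'I_(nblk I) * 'I_(nblk I)}) :
  validU I U -> validU I U' -> sigmaU I U =1 sigmaU I U' ->
  nonId U \subset nonId U'.
Proof.
move=> vU vU' e; apply/subsetP => -[s t]; rewrite !inE /= => /andP[pU nst].
have [h bh] := blk_nonempty HI s.
have st : sim I s t by case: vU => [+ _]; move/(_ _ pU).
have e1 := sigmaU_some (f:=h) vU pU (esym bh).
have b1 := blk_sigma HI st bh.
case: (pselect (exists2 q, q \in U' & q.1 = blk I h)) => [[q qU' qb]|nq].
  have e2 := sigmaU_some (f:=h) vU' qU' qb.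
  have sq : sim I q.1 q.2 by case: vU' => [+ _]; move/(_ _ qU').
  have b2 := blk_sigma HI sq (esym qb).
  move: (e h); rewrite e1 e2 /= => eh.
  move: b1; rewrite eh b2 => q2.
  have -> : (s, t) = q by case: q qU' qb q2 {e2 sq b2 eh} => a b /= _ -> <-; rewrite bh.
  by rewrite qU' nst.
have e2 : sigmaU I U' h = h.
  by apply: sigmaU_none => p pU' pb; apply: nq; exists p.
move: (e h); rewrite e1 e2 /= => eh.
by move: b1 nst; rewrite eh bh => ->; rewrite eqxx.
Qed.

Lemma inv_mu I (HI : is_dcinterp I) (U : {set 'I_(nblk I) * 'I_(nblk I)}) g SC SD :
  validU I U -> g =1 sigmaU I U -> phi I SD = g @: phi I SC ->
  src I U \subset delta I SC -> tgt I U :&: (delta I SC :\: src I U) = set0 ->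
  in_mu I (sigmaU I (invU U)) SD SC.
Proof.
move=> vU eg e2 sd td.
have simU p : p \in U -> sim I p.1 p.2 by case: vU => [+ _]; apply.
have [_ [u1 u2]] := vU.
have inV p : p \in U -> p.1 != p.2 -> (p.2,p.1) \in invU U.
  by move=> pU np; apply: imset_f; rewrite inE pU np.
have Vin q : q \in invU U -> exists2 p, p \in U & (p.1 != p.2 /\ q = (p.2, p.1)).
  by case/imsetP => p; rewrite inE => /andP[pU np] ->; exists p.
have Hsym : forall i j, sim I i j -> sim I j i.
  by case: HI => _ [_ [_ [_ [Hs _]]]].
have vV : validU I (invU U).
  split; [|split].
  - by move=> q /Vin [p pU [_ ->]] /=; apply: Hsym; apply: simU.
  - move=> q q' /Vin [p pU [_ ->]] /Vin [p' pU' [_ ->]] /= h.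
    by rewrite (u2 p p' pU pU' h).
  - move=> q q' /Vin [p pU [_ ->]] /Vin [p' pU' [_ ->]] /= h.
    by rewrite (u1 p p' pU pU' h).
have key : {in phi I SC, forall f, sigmaU I (invU U) (g f) = f}.
  move=> f fP; rewrite eg.
  case: (pselect (exists2 p, p \in U & p.1 = blk I f)) => [[p pU pb]|np].
    rewrite (sigmaU_some vU pU pb).
    case: (eqVneq p.1 p.2) => [peq|pne].
      rewrite -peq (sigma_id HI (esym pb)).
      apply: sigmaU_none => q /Vin [p' p'U [np' ->]] /= h.
      have pp : p' = p by apply: u2 => //; rewrite h -peq pb.
      by move: np'; rewrite pp peq eqxx.
    rewrite (sigmaU_some (p:=(p.2,p.1)) vV (inV p pU pne)) /=.
      by apply: (sigma_inv HI (simU p pU)); rewrite pb.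
    by rewrite (blk_sigma HI (simU p pU) (esym pb)).
  rewrite (sigmaU_none (U:=U)); last by move=> p pU pb; apply: np; exists p.
  apply: sigmaU_none => q /Vin [p pU [np' ->]] /= h.
  have : blk I f \in tgt I U :&: (delta I SC :\: src I U).
    rewrite !inE; apply/andP; split; first by apply/imsetP; exists p.
    apply/andP; split.
      by apply/imsetP => -[p' p'U e]; apply: np; exists p'.
    by apply/set0Pn; exists f; rewrite in_setI fP inE eqxx.
  by rewrite td inE.
exists (invU U); split; [exact: vV | split; [done| split]].
  rewrite e2 -imset_comp (eq_in_imset (g:=id)) ?imset_id //.
split.
  apply/subsetP => t /imsetP [q /Vin [p pU [np ->]] ->] /=.
  have : p.1 \in delta I SC by apply: (subsetP sd); apply/imsetP; exists p.
  rewrite /delta inE => /set0Pn [f]; rewrite in_setI !inE => /andP [fP /eqP bf].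
  rewrite ?inE; apply/set0Pn; exists (g f).
  rewrite in_setI e2 imset_f /=; last by rewrite inE.
  rewrite inE eg (sigmaU_some vU pU (esym bf)).
  by rewrite (blk_sigma HI (simU p pU) bf) eqxx.
apply/setP => i; rewrite !inE; apply/negbTE/negP => /andP [ti /andP [ni di]].
move: ti => /imsetP [q /Vin [p pU [np ->]] ei]; simpl in ei; subst i.
move: di => /set0Pn [h]; rewrite in_setI => /andP [hP]; rewrite inE => /eqP bh.
rewrite e2 in hP; case/imsetP: hP => f fP ehf; subst h.
rewrite eg in bh.
case: (pselect (exists2 p', p' \in U & p'.1 = blk I f)) => [[p' p'U pb']|nq].
  rewrite (sigmaU_some vU p'U pb') (blk_sigma HI (simU p' p'U) (esym pb')) in bh.
  case: (eqVneq p'.1 p'.2) => [eq|ne].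
    have pp : p' = p by apply: u1 => //; rewrite eq bh.
    by move: np; rewrite -pp eq eqxx.
  move/negP: ni; apply; apply/imsetP; exists (p'.2, p'.1); first exact: inV.
  by rewrite /= bh.
rewrite sigmaU_none in bh; last by move=> p' p'U pb'; apply: nq; exists p'.
by apply: nq; exists p => //; rewrite bh.
Qed.

Theorem proposition5 (C1 C2 D1 D2 : natconcept) :
  entails [:: Analogy C1 C2 D1 D2] (Analogy C2 C1 D2 D1).
Proof.
move=> I [HI [Hax _]].
have [g [[U [vU [gU [e1 [s1 t1]]]]] [U' [vU' [gU' [e1' [s1' t1']]]]]]] :=
  Hax _ (or_introl erefl).
exists (sigmaU I (invU U)); split.
  by apply: (inv_mu HI vU gU).
have -> : invU U = invU U'.
  rewrite /invU (_ : nonId U = nonId U') //.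
  apply/eqP; rewrite eqEsubset !nonId_sub //.
    by move=> x; rewrite -gU' gU.
  by move=> x; rewrite -gU gU'.
by apply: (inv_mu HI vU' gU').
Qed.
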